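(* Let $m,n\ge1$, $A\in\mathbb{R}^{m\times n}$, $\mathbf{u},\mathbf{l}\in\mathbb{R}^n$, $C$ a finite set of ReLU constraints and $\mathcal{T}$ a proof tree. If $\mathrm{check\_tree}(A,\mathbf{u},\mathbf{l},C,\mathcal{T})$ returns true, then the DNN verification query $\langle A,\mathbf{u},\mathbf{l},C\rangle$ has no solution, i.e. there is no $\mathbf{s}\in\mathbb{R}^n$ with $A\mathbf{s}=\mathbf{0}$, $\mathbf{l}\le\mathbf{s}\le\mathbf{u}$ and $\mathbf{s}$ satisfying every constraint in $C$.
   Context: For vectors, $\mathbf{l}\le\mathbf{x}\le\mathbf{u}$ means $l_j\le x_j\le u_j$ for all $j=1,\dots,n$. A ReLU constraint is a triple $(b,f,a)$ of indices in $\{1,\dots,n\}$; $\mathbf{s}\in\mathbb{R}^n$ satisfies it if $s_f=\max(s_b,0)$ and $s_f-s_b-s_a=0$. A proof tree is either $\mathrm{Leaf}(w)$ with $w$ a finite list of reals, or $\mathrm{Node}(\sigma,\mathcal{T}^L,\mathcal{T}^R)$ with $\mathcal{T}^L,\mathcal{T}^R$ proof trees and $\sigma$ a split, which is either $\mathrm{SingleVar}(i,k)$ ($i$ an index, $k\in\mathbb{R}$) or $\mathrm{Relu}(b,f,a)$ ($b,f,a$ indices). A split is valid w.r.t. $C$ if it is $\mathrm{SingleVar}(i,k)$ with $1\le i\le n$, or $\mathrm{Relu}(b,f,a)$ with $(b,f,a)\in C$ and $b,f,a$ pairwise distinct. For $\mathbf{v}\in\mathbb{R}^n$, $\mathbf{v}[i\mapsto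 k]$ replaces the $i$-th entry by $k$. $\mathrm{update\_bounds}(\mathbf{l},\mathbf{u},\sigma)$ returns $((\mathbf{l}^L,\mathbf{u}^L),(\mathbf{l}^R,\mathbf{u}^R))$: for $\sigma=\mathrm{SingleVar}(i,k)$, $\mathbf{l}^L=\mathbf{l}$, $\mathbf{u}^L=\mathbf{u}[i\mapsto k]$, $\mathbf{l}^R=\mathbf{l}[i\mapsto k]$, $\mathbf{u}^R=\mathbf{u}$; for $\sigma=\mathrm{Relu}(b,f,a)$, $\mathbf{l}^L=\mathbf{l}[f\mapsto0]$, $\mathbf{u}^L=\mathbf{u}[b\mapsto0][f\mapsto0]$, $\mathbf{l}^R=\mathbf{l}[b\mapsto0][a\mapsto0]$, $\mathbf{u}^R=\mathbf{u}[a\mapsto0]$. The leaf check $\mathrm{leafcheck}(A,\mathbf{u},\mathbf{l},w)$ is true iff $w\in\mathbb{R}^m$ and, writing $\gamma=w^\intercal A\in\mathbb{R}^n$, $\sum_{j:\gamma_j>0}\gamma_ju_j+\sum_{j:\gamma_j<0}\gamma_jl_j<0$. Then $\mathrm{check\_tree}(A,\mathbf{u},\mathbf{l},C,\mathrm{Leaf}(w))=\mathrm{leafcheck}(A,\mathbf{u},\mathbf{l},w)$, and $\mathrm{check\_tree}(A,\mathbf{u},\mathbf{l},C,\mathrm{Node}(\sigma,\mathcal{T}^L,\mathcal{T}^R))$ is true iff $\sigma$ is valid w.r.t. $C$ and both $\mathrm{check\_tree}(A,\mathbf{u}^L,\mathbf{l}^L,C,\mathcal{T}^L)$ and $\mathrm{check\_tree}(A,\mathbf{u}^R,\mathbf{l}^R,C,\mathcal{T}^R)$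 are true, with $((\mathbf{l}^L,\mathbf{u}^L),(\mathbf{l}^R,\mathbf{u}^R))=\mathrm{update\_bounds}(\mathbf{l},\mathbf{u},\sigma)$. *)

(* Defs.v *)
From HB Require Import structures.
From mathcomp Require Import all_boot all_order all_algebra.
From mathcomp Require Import reals.
Set Implicit Arguments. Unset Strict Implicit. Unset Printing Implicit Defensive.
Import Order.TTheory GRing.Theory Num.Theory.
Local Open Scope ring_scope.

(* Indices are 0-based: the paper's index i in {1..n} is i-1 here.
   Indices occurring in proof-tree splits are raw naturals (they may be out of
   range; validity of the split checks them). *)

Definition relu_sat (R : realType) (n : nat) (s : 'cV[R]_n)
  (c : 'I_n * 'I_n * 'I_n) : Prop :=
  let: (b, f, a) := c in
  s f 0 = Num.max (s b 0) 0 /\ s f 0 - s b 0 - s a 0 = 0.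

Inductive split (R : Type) :=
| SingleVar of nat & R
| Relu of nat & nat & nat.

Inductive proof_tree (R : Type) :=
| Leaf of seq R
| Node of split R & proof_tree R & proof_tree R.

Arguments SingleVar {R}.
Arguments Relu {R}.
Arguments Leaf {R}.
Arguments Node {R}.

(* v[i |-> k] ; a no-op if i is out of range *)
Definition upd (R : realType) (n : nat) (v : 'cV[R]_n) (i : nat) (k : R)
  : 'cV[R]_n :=
  \col_j (if (j : nat) == i then k else v j 0).

Definition valid_split (R : realType) (n : nat) (C : seq ('I_n * 'I_n * 'I_n))
  (sg : split R) : bool :=
  match sg with
  | SingleVar i _ => (i < n)%N
  | Relu b f a =>
      has (fun c : 'I_n * 'I_n * 'I_n =>
             [&& (c.1.1 : nat) == b, (c.1.2 : nat) == f & (c.2 : nat) == a]) C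
      && [&& b != f, b != a & f != a]
  end.

Definition update_bounds (R : realType) (n : nat) (l u : 'cV[R]_n)
  (sg : split R) : ('cV[R]_n * 'cV[R]_n) * ('cV[R]_n * 'cV[R]_n) :=
  match sg with
  | SingleVar i k => ((l, upd u i k), (upd l i k, u))
  | Relu b f a =>
      ((upd l f 0, upd (upd u b 0) f 0), (upd (upd l b 0) a 0, upd u a 0))
  end.

Definition leafcheck (R : realType) (m n : nat) (A : 'M[R]_(m, n))
  (u l : 'cV[R]_n) (w : seq R) : bool :=
  (size w == m) &&
  (let gamma := fun j : 'I_n => \sum_(i < m) w`_i * A i j in
   \sum_(j < n | gamma j > 0) gamma j * u j 0
   + \sum_(j < n | gamma j < 0) gamma j * l j 0 < 0).

Fixpoint check_tree (R : realType) (m n : nat) (A : 'M[R]_(m, n))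
  (u l : 'cV[R]_n) (C : seq ('I_n * 'I_n * 'I_n)) (T : proof_tree R) : bool :=
  match T with
  | Leaf w => leafcheck A u l w
  | Node sg TL TR =>
      let bnds := update_bounds l u sg in
      [&& valid_split C sg,
          check_tree A bnds.1.2 bnds.1.1 C TL
        & check_tree A bnds.2.2 bnds.2.1 C TR]
  end.

(* Main.v *)
Require Import Defs.
From HB Require Import structures.
From mathcomp Require Import all_boot all_order all_algebra.
From mathcomp Require Import reals.
Import Order.TTheory GRing.Theory Num.Theory.
Local Open Scope ring_scope.

Lemma leaf_false (R : realType) (m n : nat) (A : 'M[R]_(m, n)) (u l s : 'cV[R]_n) w :
  leafcheck A u l w -> A *m s = 0 -> (forall j : 'I_n, l j 0 <= s j 0 <= u j 0) -> False.
Proof.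
move=> /andP [_ Hlt] As Hb.
rewrite /= in Hlt.
set gamma := fun j : 'I_n => \sum_(i < m) w`_i * A i j.
rewrite -/gamma in Hlt.
have H0 : \sum_j gamma j * s j 0 = 0.
  rewrite /gamma; under eq_bigr do rewrite mulr_suml.
  rewrite exchange_big /=; apply: big1 => i _.
  have E : \sum_j A i j * s j 0 = 0 by have := congr1 (fun M : 'cV[R]_m => M i 0) As; rewrite /= !mxE.
  transitivity (w`_i * \sum_j A i j * s j 0); last by rewrite E mulr0.
  by rewrite mulr_sumr; apply: eq_bigr => j _; rewrite mulrA.
have Hle : \sum_j gamma j * s j 0 <=
   \sum_(j < n | gamma j > 0) gamma j * u j 0
   + \sum_(j < n | gamma j < 0) gamma j * l j 0.
  rewrite [X in _ <= X + _]big_mkcond [X in _ <= _ + X]big_mkcond -big_split /=; apply: ler_sum => j _.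
  have /andP [Hl Hu] := Hb j.
  case: (ltrgtP (gamma j) 0) => Hg.
  - by rewrite add0r; apply: ler_wnM2l => //; apply: ltW.
  - by rewrite addr0; apply: ler_wpM2l => //; apply: ltW.
  - by rewrite Hg !mul0r addr0.
by move: (le_lt_trans Hle Hlt); rewrite H0 ltxx.
Qed.

Lemma updE (R : realType) (n : nat) (v : 'cV[R]_n) i k (j : 'I_n) :
  upd v i k j 0 = if (j : nat) == i then k else v j 0.
Proof. by rewrite /upd mxE. Qed.

Theorem mainTheorem8 (R : realType) (m n : nat) (hm : (0 < m)%N) (hn : (0 < n)%N)
  (A : 'M[R]_(m, n)) (u l : 'cV[R]_n) (C : seq ('I_n * 'I_n * 'I_n))
  (T : proof_tree R) :
  check_tree A u l C T ->
  ~ (exists s : 'cV[R]_n,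
        A *m s = 0 /\
        (forall j : 'I_n, l j 0 <= s j 0 <= u j 0) /\
        (forall c, c \in C -> relu_sat s c)).
Proof.
move=> HT [s [As [Hb HC]]].
elim: T u l HT Hb => [w|sg TL IHL TR IHR] u l /=.
  by move=> H Hb; exact: (@leaf_false _ _ _ _ _ _ _ _ H As Hb).
case: sg => [i k|b f a] /and3P [Hv HL HR] Hb.
- have Hi : (i < n)%N := Hv.
  rewrite /= in HL HR.
  case: (lerP (s (Ordinal Hi) 0) k) => Hk.
  + apply: (IHL _ _ HL) => j; rewrite updE; have := Hb j.
    case: eqP => Eji //; case/andP => -> _.
    by have -> : j = Ordinal Hi by apply: val_inj; rewrite /= Eji.
  + apply: (IHR _ _ HR) => j; rewrite updE; have := Hb j.
    case: eqP => Eji //; case/andP => _ ->; rewrite andbT.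
    have -> : j = Ordinal Hi by apply: val_inj; rewrite /= Eji.
    exact: ltW.
- move: Hv => /andP [/hasP [[[b' f'] a'] Hc /and3P [/eqP Eb /eqP Ef /eqP Ea]]
    /and3P [Hbf Hba Hfa]].
  subst b f a; rewrite /= in HL HR.
  have := HC _ Hc; rewrite /relu_sat /= => -[Hmax Hsum].
  case: (lerP (s b' 0) 0) => Hs.
  + have Hf0 : s f' 0 = 0 by rewrite Hmax max_r.
    apply: (IHL _ _ HL) => j; rewrite !updE; have := Hb j.
    case: eqP => Ejf.
      have -> : j = f' by apply: val_inj; exact: Ejf.
      by rewrite Hf0 lexx.
    case: eqP => Ejb //; case/andP => -> _.
    by have -> : j = b' by apply: val_inj; exact: Ejb.
  + have Hfb : s f' 0 = s b' 0 by rewrite Hmax max_l // ltW.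
    have Ha0 : s a' 0 = 0.
      by move: Hsum; rewrite Hfb subrr sub0r => /eqP; rewrite oppr_eq0 => /eqP.
    apply: (IHR _ _ HR) => j; rewrite !updE; have := Hb j.
    case: eqP => Eja.
      have -> : j = a' by apply: val_inj; exact: Eja.
      by rewrite Ha0 lexx.
    case: eqP => Ejb //; case/andP => _ ->; rewrite andbT.
    have -> : j = b' by apply: val_inj; exact: Ejb.
    exact: ltW.
Qed.
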